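(* Let $X$ be a smooth projective surface over an algebraically closed field of characteristic zero and $D=D_1+\cdots+D_n$ a strict normal crossings divisor with smooth irreducible components. Let $E$ be a vector bundle of rank $r$ on $X$ with, for each $i$, a full flag of subbundles $0=F^i_0\subset F^i_1\subset\cdots\subset F^i_r=E|_{D_i}$ and real weights $\alpha(D_i,1),\dots,\alpha(D_i,r)$. Put $Gr(D_i,k):=F^i_k/F^i_{k-1}$ (a line bundle on $D_i$), $\deg Gr(D_i,k)$ its degree, $\alpha^{tot}(D_i):=\sum_{k=1}^r\alpha(D_i,k)$ and $\beta(D_i,k):=\alpha(D_i,k)-\alpha^{tot}(D_i)/r$. Then $$\Delta^{Par}(E)=\Delta^{Vb}(E)+\sum_{i}\sum_{k=1}^r\beta(D_i,k)\deg Gr(D_i,k)-\frac12\sum_i\sum_{k=1}^r\beta(D_i,k)^2\,(D_i\cdot D_i)-\frac12\sum_{i\neq j}\ \sum_{y\in D_i\cap D_j}\ \sum_{k=1}^r\beta(D_i,k)\,\beta(D_j,\sigma(y,i,j)(k)),$$ where the sum over $i\ne j$ runs over ordered pairs.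
   Context: All Chern classes are taken in $A^*(X)\otimes\mathbb{Q}$ and classes of degree 2 are identified with rational numbers via the degree. For a rank $r$ bundle, $\Delta^{Vb}(E):=\frac{1}{2r}ch_1(E)^2-ch_2(E)$. For $y\in D_i\cap D_j$ ($i\neq j$), $\sigma(y,i,j)$ is the permutation of $\{1,\dots,r\}$ sending $k$ to the unique $l$ such that $\big(F^i_k(y)\cap F^j_l(y)\big)/\big(F^i_{k-1}(y)\cap F^j_l(y)+F^i_k(y)\cap F^j_{l-1}(y)\big)\neq0$ (fibers at $y$). The parabolic Chern characters are defined by $ch_1^{Par}(E):=ch_1(E)-\sum_i\sum_k\alpha(D_i,k)[D_i]$ and $ch_2^{Par}(E):=ch_2(E)-\sum_i\sum_k\alpha(D_i,k)\deg Gr(D_i,k)+\frac12\sum_i\sum_k\alpha(D_i,k)^2(D_i\cdot D_i)+\frac12\sum_{i\ne j}\sum_{y\in D_i\cap D_j}\sum_k\alpha(D_i,k)\alpha(D_j,\sigma(y,i,j)(k))$ (ordered pairs $i\neq j$), and $\Delta^{Par}(E):=\frac{1}{2r}ch_1^{Par}(E)^2-ch_2^{Par}(E)$. *)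

(* Defs.v *)
From HB Require Import structures.
From mathcomp Require Import all_boot all_order all_algebra all_fingroup.
Set Implicit Arguments. Unset Strict Implicit. Unset Printing Implicit Defensive.
Import Order.TTheory GRing.Theory Num.Theory.
Local Open Scope ring_scope.

Section ParabolicChern.
Variables (R : realFieldType) (V : lmodType R).
(* dot = intersection pairing on A^1(X) (x) R, with values identified with
   numbers via the degree *)
Variable dot : V -> V -> R.
Variables (n r : nat).
Variables (c1E : V) (ch2E : R).
Variable D : 'I_n -> V.
Variable alpha : 'I_n -> 'I_r -> R.         (* alpha(D_i,k), k = 0..r-1 *)
Variable degGr : 'I_n -> 'I_r -> R.
Variable Y : 'I_n -> 'I_n -> finType.       (* points of D_i \cap D_j *)
Variable sigma : forall i j : 'I_n, Y i j -> {perm 'I_r}.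

Definition ch1 : V := c1E.
Definition ch2 : R := ch2E.

Definition DeltaVb : R := (2 * r%:R)^-1 * dot ch1 ch1 - ch2.

Definition ch1Par : V :=
  ch1 - \sum_(i < n) \sum_(k < r) alpha i k *: D i.

Definition ch2Par : R :=
  ch2 - \sum_(i < n) \sum_(k < r) alpha i k * degGr i k
  + 2^-1 * \sum_(i < n) \sum_(k < r) alpha i k ^+ 2 * dot (D i) (D i)
  + 2^-1 * \sum_(i < n) \sum_(j < n | j != i) \sum_(y : Y i j)
             \sum_(k < r) alpha i k * alpha j (sigma y k).

Definition DeltaPar : R := (2 * r%:R)^-1 * dot ch1Par ch1Par - ch2Par.

Definition alpha_tot (i : 'I_n) : R := \sum_(k < r) alpha i k.

Definition beta (i : 'I_n) (k : 'I_r) : R := alpha i k - alpha_tot i / r%:R.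

End ParabolicChern.

(* Main.v *)
Require Import Defs.
From HB Require Import structures.
From mathcomp Require Import all_boot all_order all_algebra all_fingroup.
From mathcomp Require Import ring.
Import Order.TTheory GRing.Theory Num.Theory.
Local Open Scope ring_scope.

Theorem mainTheorem1
  (R : realFieldType) (V : lmodType R) (dot : V -> V -> R)
  (* the intersection pairing is symmetric and bilinear *)
  (dot_sym : forall u v, dot u v = dot v u)
  (dot_addl : forall u v w, dot (u + v) w = dot u w + dot v w)
  (dot_scalel : forall (a : R) u w, dot (a *: u) w = a * dot u w)
  (n r : nat) (r_gt0 : (0 < r)%N)
  (c1E : V) (ch2E : R) (D : 'I_n -> V)
  (alpha : 'I_n -> 'I_r -> R) (degGr : 'I_n -> 'I_r -> R)
  (Y : 'I_n -> 'I_n -> finType)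
  (sigma : forall i j : 'I_n, Y i j -> {perm 'I_r})
  (* det(E|_{D_i}) = Gr(D_i,1) (x) ... (x) Gr(D_i,r), hence degrees add up *)
  (hdeg : forall i, \sum_(k < r) degGr i k = dot c1E (D i))
  (* strict normal crossings: distinct components meet transversally *)
  (hcross : forall i j, i != j -> dot (D i) (D j) = #|Y i j|%:R) :
  DeltaPar dot c1E ch2E D alpha degGr sigma =
    DeltaVb dot r c1E ch2E
    + \sum_(i < n) \sum_(k < r) beta alpha i k * degGr i k
    - 2^-1 * \sum_(i < n) \sum_(k < r) beta alpha i k ^+ 2 * dot (D i) (D i)
    - 2^-1 * \sum_(i < n) \sum_(j < n | j != i) \sum_(y : Y i j)
               \sum_(k < r) beta alpha i k * beta alpha j (sigma i j y k).
Proof.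
have rN0 : (r%:R : R) != 0 by rewrite pnatr_eq0 -lt0n.
have dot0l : forall w, dot 0 w = 0.
  by move=> w; rewrite -(scale0r (0 : V)) dot_scalel mul0r.
have dotNl : forall u w, dot (- u) w = - dot u w.
  by move=> u w; rewrite -scaleN1r dot_scalel mulN1r.
have dot_suml : forall (I : finType) (P : pred I) (F : I -> V) w,
    dot (\sum_(i | P i) F i) w = \sum_(i | P i) dot (F i) w.
  move=> I P F w; apply: (big_morph (fun u => dot u w)).
    by move=> u v; apply: dot_addl.
  by apply: dot0l.
set t := fun i => alpha_tot alpha i.
set S1 := \sum_(i < n) \sum_(k < r) alpha i k * degGr i k.
set S2 := \sum_(i < n) t i * dot c1E (D i).
set S3 := \sum_(i < n) \sum_(k < r) alpha i k ^+ 2 * dot (D i) (D i).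
set S4 := \sum_(i < n) t i ^+ 2 * dot (D i) (D i).
set S5 := \sum_(i < n) \sum_(j < n | j != i) t i * t j * dot (D i) (D j).
set X := \sum_(i < n) \sum_(j < n | j != i) \sum_(y : Y i j)
             \sum_(k < r) alpha i k * alpha j (sigma i j y k).
have hT : \sum_(i < n) \sum_(k < r) alpha i k *: D i = \sum_(i < n) t i *: D i.
  by apply: eq_bigr => i _; rewrite -scaler_suml.
have hTc : dot (\sum_(i < n) t i *: D i) c1E = S2.
  rewrite dot_suml; apply: eq_bigr => i _; by rewrite dot_scalel dot_sym.
have hTT : dot (\sum_(i < n) t i *: D i) (\sum_(i < n) t i *: D i) = S4 + S5.
  rewrite dot_suml /S4 /S5 -big_split /=; apply: eq_bigr => i _.
  rewrite dot_scalel dot_sym dot_suml (bigD1 i) //= mulrDr; congr (_ + _).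
    by rewrite dot_scalel mulrA expr2.
  rewrite mulr_sumr; apply: eq_bigr => j _.
    by rewrite dot_scalel (dot_sym (D j)) mulrA.
have hLHS : DeltaPar dot c1E ch2E D alpha degGr sigma =
    (2 * r%:R)^-1 * (dot c1E c1E - S2 - S2 + (S4 + S5))
    - (ch2E - S1 + 2^-1 * S3 + 2^-1 * X).
  rewrite /DeltaPar /ch1Par /ch2Par /ch1 /ch2 hT.
  have hsq : forall u v, dot (u - v) (u - v) = dot u u - dot v u - dot v u + dot v v.
    move=> u v; rewrite dot_addl dotNl (dot_sym u (u - v)) (dot_sym v (u - v)).
    rewrite !dot_addl !dotNl (dot_sym u v); ring.
  rewrite hsq hTc hTT.
  congr (_ * _ - _); rewrite /S1 /S3 /X; ring.
rewrite hLHS.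
have hB1 : \sum_(i < n) \sum_(k < r) beta alpha i k * degGr i k = S1 - S2 / r%:R.
  rewrite /S1 /S2 mulr_suml -sumrB; apply: eq_bigr => i _.
  have -> : \sum_(k < r) beta alpha i k * degGr i k =
     \sum_(k < r) alpha i k * degGr i k - t i / r%:R * \sum_(k < r) degGr i k.
    rewrite mulr_sumr -sumrB; apply: eq_bigr => k _; rewrite /beta /t; ring.
  rewrite hdeg; ring.
have hB2 : \sum_(i < n) \sum_(k < r) beta alpha i k ^+ 2 * dot (D i) (D i)
    = S3 - S4 / r%:R.
  rewrite /S3 /S4 mulr_suml -sumrB; apply: eq_bigr => i _.
  rewrite /beta.
  have -> : \sum_(k < r) (alpha i k - alpha_tot alpha i / r%:R) ^+ 2 * dot (D i) (D i)
     = \sum_(k < r) (alpha i k ^+ 2 * dot (D i) (D i))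
       - (2 * alpha_tot alpha i / r%:R * dot (D i) (D i)) * \sum_(k < r) alpha i k
       + \sum_(k < r) ((alpha_tot alpha i / r%:R) ^+ 2 * dot (D i) (D i)).
    rewrite mulr_sumr -sumrB -big_split /=; apply: eq_bigr => k _; ring.
  rewrite sumr_const card_ord -/(alpha_tot alpha i) -/(t i).
  rewrite -mulr_natr; field; exact: rN0.
have hB3 : \sum_(i < n) \sum_(j < n | j != i) \sum_(y : Y i j)
               \sum_(k < r) beta alpha i k * beta alpha j (sigma i j y k)
    = X - S5 / r%:R.
  rewrite /X /S5 mulr_suml -sumrB; apply: eq_bigr => i _.
  rewrite mulr_suml -sumrB; apply: eq_bigr => j ji.
  rewrite hcross 1?eq_sym //.
  have -> : \sum_(y : Y i j) \sum_(k < r) beta alpha i k * beta alpha j (sigma i j y k)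
     = \sum_(y : Y i j) (\sum_(k < r) alpha i k * alpha j (sigma i j y k) - t i * t j / r%:R).
    apply: eq_bigr => y _.
    rewrite /beta.
    have hs : \sum_(k < r) alpha j (sigma i j y k) = t j.
      by rewrite /t /alpha_tot [RHS](reindex_inj (h:=sigma i j y) perm_inj).
    have -> : \sum_(k < r) (alpha i k - alpha_tot alpha i / r%:R) *
                 (alpha j (sigma i j y k) - alpha_tot alpha j / r%:R)
       = \sum_(k < r) alpha i k * alpha j (sigma i j y k)
         - alpha_tot alpha j / r%:R * \sum_(k < r) alpha i k
         - alpha_tot alpha i / r%:R * \sum_(k < r) alpha j (sigma i j y k)
         + \sum_(k < r) (alpha_tot alpha i / r%:R * (alpha_tot alpha j / r%:R)).
      rewrite !mulr_sumr -!sumrB -big_split /=; apply: eq_bigr => k _; ring.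
    rewrite hs sumr_const card_ord -/(alpha_tot alpha i) -/(t i) -/(t j) -mulr_natr.
    rewrite /t; field; exact: rN0.
  rewrite sumrB sumr_const -mulr_natr; field; exact: rN0.
rewrite hB1 hB2 hB3 /DeltaVb /ch1 /ch2; field; exact: rN0.
Qed.
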